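(* Let $n,k\ge1$, $\mathfrak g=\mathfrak{gl}_n(\mathbb{C})$, $M=V^{\otimes k}\otimes(V^* )^{\otimes k}$ and $e=(\mathrm{id}-p_1)\cdots(\mathrm{id}-p_k)$. Let $0\le r\le k$, let $\underline s=(s_1<\cdots<s_{k-r})$ be a subset of $\{1,\dots,k\}$ of size $k-r$, let $\underline t=(t_1,\dots,t_{k-r})$ be a sequence of $k-r$ distinct elements of $\{1,\dots,k\}$, let $\lambda,\mu$ be partitions of $r$, let $T$ be a standard tableau of shape $\lambda$ with entries in $\{1,\dots,k\}\setminus\underline s$ and $T^*$ a standard tableau of shape $\mu$ with entries in $\{1,\dots,k\}\setminus\underline t$, and set $y=y_Ty_{T^*}c_{\underline s,\underline t}$. If $s_i=t_i$ for some $i\in\{1,\dots,k-r\}$ (i.e. the product $c_{\underline s,\underline t}$ contains a factor $c_{j,j}$), then $ey=0=ye$.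
   Context: $V=\mathbb{C}^n$ (column vectors, standard basis $v_1,\dots,v_n$), $V^*$ row vectors with dual basis $v_1^*,\dots,v_n^*$. For $1\le i,j\le k$ the contraction $c_{i,j}:M\to M$ is $c_{i,j}(u_1\otimes\cdots\otimes u_k\otimes w_1^*\otimes\cdots\otimes w_k^* )=(w_j^*u_i)\sum_{\ell=1}^n(\text{same tensor with }u_i\text{ replaced by }v_\ell\text{ and }w_j^*\text{ replaced by }v_\ell^* )$. Set $p_i=\frac1n c_{i,i}$ and $c_{\underline s,\underline t}=c_{s_1,t_1}c_{s_2,t_2}\cdots c_{s_{k-r},t_{k-r}}$. A standard tableau of shape $\lambda$ with entries in a set $S$ of size $|\lambda|$ is a filling of the Young diagram of $\lambda$ by the elements of $S$, each used once, increasing along rows and down columns. For such $T$, the row group $R_T$ (resp. column group $C_T$) is the set of permutations of $\{1,\dots,k\}$ fixing every element not in $T$ and sending each entry of $T$ to an entry in the same row (resp. column) of $T$, and $y_T=\big(\sum_{\rho\in R_T}\rho\big)\big(\sum_{\gamma\in C_T}\mathrm{sgn}(\gamma)\gamma\big)\in\mathbb{C}S_k$. Here $y_T$ acts on $M$ by place permutations of the $k$ factors of $V^{\otimes k}$ and $y_{T^*}$ by place permutations of the $k$ factors of $(V^* )^{\otimes k}$. *)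

(* Defs.v *)
From HB Require Import structures.
From mathcomp Require Import all_boot all_order all_algebra all_fingroup complex.
From mathcomp Require Import Rstruct.
From Stdlib Require Import Reals.
Set Implicit Arguments. Unset Strict Implicit. Unset Printing Implicit Defensive.
Import Order.TTheory GRing.Theory Num.Theory.
Local Open Scope ring_scope.

Definition CC : numClosedFieldType := (Rdefinitions.R)[i].

(* Multi-indices: a : 'I_k -> 'I_n encodes v_{a 1} (x) ... (x) v_{a k}. *)
Definition mindex (n k : nat) := {ffun 'I_k -> 'I_n}.

(* Basis of M = V^{(x)k} (x) (V^* )^{(x)k}: pairs (a, b) standing for
   v_{a 1} (x) ... (x) v_{a k} (x) v*_{b 1} (x) ... (x) v*_{b k}. *)
Definition mbasis (n k : nat) := (mindex n k * mindex n k)%type.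

Definition Mspace (n k : nat) := {ffun mbasis n k -> CC}.

Definition mdelta (n k : nat) (x : mbasis n k) : Mspace n k :=
  [ffun y => (y == x)%:R].

Definition linext (n k : nat) (g : mbasis n k -> Mspace n k) (f : Mspace n k)
  : Mspace n k := \sum_(x : mbasis n k) f x *: g x.

Definition mset (n k : nat) (a : mindex n k) (i : 'I_k) (l : 'I_n) : mindex n k :=
  [ffun j => if j == i then l else a j].

Definition contr (n k : nat) (i j : 'I_k) : Mspace n k -> Mspace n k :=
  linext (fun x : mbasis n k =>
    (x.2 j == x.1 i)%:R *:
      \sum_(l : 'I_n) mdelta ((mset x.1 i l, mset x.2 j l) : mbasis n k)).

Definition pproj (n k : nat) (i : 'I_k) (f : Mspace n k) : Mspace n k :=
  (n%:R)^-1 *: contr i i f.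

(* e = (id - p_1) ... (id - p_k)  (composition, p_1 outermost) *)
Definition eop (n k : nat) : Mspace n k -> Mspace n k :=
  foldr (fun (i : 'I_k) (acc : Mspace n k -> Mspace n k) =>
           fun f => acc f - pproj i (acc f)) (fun f => f) (enum 'I_k).

Definition contr_seq (n k : nat) (s t : seq 'I_k) : Mspace n k -> Mspace n k :=
  foldr (fun (ij : 'I_k * 'I_k) (acc : Mspace n k -> Mspace n k) =>
           fun f => @contr n k ij.1 ij.2 (acc f)) (fun f => f) (zip s t).

(* Place permutation of the k factors of V^{(x)k}:
   u_1 (x) ... (x) u_k |-> u_{sigma^-1 1} (x) ... (x) u_{sigma^-1 k},
   i.e. the basis vector indexed by a goes to the one indexed by a o sigma^-1. *)
Definition permV (n k : nat) (sigma : {perm 'I_k}) : Mspace n k -> Mspace n k :=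
  linext (fun x : mbasis n k =>
    mdelta (([ffun j : 'I_k => x.1 ((sigma^-1)%g j)], x.2) : mbasis n k)).

Definition permVd (n k : nat) (sigma : {perm 'I_k}) : Mspace n k -> Mspace n k :=
  linext (fun x : mbasis n k =>
    mdelta ((x.1, [ffun j : 'I_k => x.2 ((sigma^-1)%g j)]) : mbasis n k)).

Local Close Scope ring_scope.

Definition is_partition (lam : seq nat) (r : nat) : bool :=
  [&& sorted geq lam, all (fun x : nat => 0 < x) lam & sumn lam == r]%N.

(* A tableau is the list of its rows (top to bottom), each row a list of
   entries (left to right). Its shape is the list of row lengths. *)
Definition tableau (k : nat) := seq (seq 'I_k).

Definition shape (k : nat) (T : tableau k) : seq nat := map size T.

Definition entries (k : nat) (T : tableau k) : seq 'I_k := flatten T.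

(* numerical value of the entry in row i, column j (0 if absent) *)
Definition tab_val (k : nat) (T : tableau k) (i j : nat) : nat :=
  nth 0%N (map val (nth [::] T i)) j.

Definition standard_tableau (k : nat) (lam : seq nat) (S : {set 'I_k})
    (T : tableau k) : Prop :=
  [/\ shape T = lam,
      uniq (entries T),
      (forall x : 'I_k, (x \in entries T) = (x \in S)),
      (forall i j : nat, (j.+1 < size (nth [::] T i))%N ->
          (tab_val T i j < tab_val T i j.+1)%N) &
      (forall i j : nat, (j < size (nth [::] T i.+1))%N ->
          (tab_val T i j < tab_val T i.+1 j)%N)].

Definition row_of (k : nat) (T : tableau k) (x : 'I_k) : nat :=
  find (fun row => x \in row) T.
Definition col_of (k : nat) (T : tableau k) (x : 'I_k) : nat :=
  index x (nth [::] T (row_of T x)).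

Definition row_group (k : nat) (T : tableau k) : {set {perm 'I_k}} :=
  [set g : {perm 'I_k} | [forall x : 'I_k,
     if x \in entries T then (g x \in entries T) && (row_of T (g x) == row_of T x)
     else g x == x]].
Definition col_group (k : nat) (T : tableau k) : {set {perm 'I_k}} :=
  [set g : {perm 'I_k} | [forall x : 'I_k,
     if x \in entries T then (g x \in entries T) && (col_of T (g x) == col_of T x)
     else g x == x]].

Local Open Scope ring_scope.
Definition sgnp (k : nat) (g : {perm 'I_k}) : CC := (-1) ^+ odd_perm g.

Definition young_op (n k : nat) (P : {perm 'I_k} -> Mspace n k -> Mspace n k)
    (T : tableau k) (f : Mspace n k) : Mspace n k :=
  \sum_(rho in row_group T) P rho (\sum_(g in col_group T) sgnp g *: P g f).

Definition yV (n k : nat) (T : tableau k) := young_op (@permV n k) T.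
Definition yVd (n k : nat) (T : tableau k) := young_op (@permVd n k) T.

(* Main.v *)
Require Import Defs.
From HB Require Import structures.
From mathcomp Require Import all_boot all_order all_algebra all_fingroup complex.
From mathcomp Require Import ring.
Set Implicit Arguments. Unset Strict Implicit. Unset Printing Implicit Defensive.
Import Order.TTheory GRing.Theory Num.Theory.
Local Open Scope ring_scope.

Section Aux.
Variables (n k : nat).
Implicit Types (f g h : Mspace n k) (a b : mindex n k).

Lemma msetE a i l x : mset a i l x = if x == i then l else a x.
Proof. by rewrite ffunE. Qed.

Lemma mset_id a i l m : mset (mset a i m) i l = mset a i l.
Proof. by apply/ffunP => x; rewrite !ffunE; case: (x == i). Qed.

Lemma mset_same a i : mset a i (a i) = a.
Proof. by apply/ffunP => x; rewrite !ffunE; case: eqP => // ->. Qed.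

Lemma mset_comm a i j l m : i != j -> mset (mset a i l) j m = mset (mset a j m) i l.
Proof.
move=> ij; apply/ffunP => x; rewrite !ffunE.
case: (eqVneq x j) => [->|xj]; first by rewrite eq_sym (negbTE ij).
by [].
Qed.

Lemma mset_eq a i l : (a == mset a i l) = (a i == l).
Proof.
apply/eqP/eqP => [->|<-]; first by rewrite ffunE eqxx.
by rewrite mset_same.
Qed.

Lemma scCE (c x : CC) : c *: x = c * x. Proof. by []. Qed.

Lemma linextE (G : mbasis n k -> Mspace n k) f x :
  linext G f x = \sum_y f y * G y x.
Proof. by rewrite /linext sum_ffunE; apply: eq_bigr => y _; rewrite ffunE. Qed.

Lemma linext0 (G : mbasis n k -> Mspace n k) : linext G 0 = 0.
Proof. by rewrite /linext big1 // => x _; rewrite ffunE scale0r. Qed.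

Lemma mdeltaE (x y : mbasis n k) : mdelta x y = (y == x)%:R.
Proof. by rewrite ffunE. Qed.

Lemma sum_pair_mset (F : mbasis n k -> CC) a b i i' l :
  \sum_y F y * ((y.2 i' == y.1 i) && (a == mset y.1 i l) && (b == mset y.2 i' l))%:R
  = ((a i == l) && (b i' == l))%:R * \sum_m F (mset a i m, mset b i' m).
Proof.
rewrite (partition_big (fun y : mbasis n k => y.1 i) predT) // mulr_sumr.
apply: eq_bigr => m _.
rewrite (bigD1 ((mset a i m, mset b i' m) : mbasis n k)); last by rewrite /= ffunE eqxx.
rewrite big1 ?addr0; first by rewrite /= !mset_id !mset_eq !ffunE !eqxx /= addr0 mulrC.
move=> [y1 y2] /andP[/andP[_ /eqP yi] ny] /=.
case: (eqVneq (y2 i') (y1 i)) => [e2|]; last by rewrite mulr0.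
case: (eqVneq a (mset y1 i l)) => [ea|]; last by rewrite mulr0.
case: (eqVneq b (mset y2 i' l)) => [eb|]; last by rewrite mulr0.
exfalso; move/eqP: ny; apply; congr (_, _); apply/ffunP => x; rewrite !ffunE.
  by rewrite ea ffunE; case: eqP => [->|].
by rewrite eb ffunE; case: eqP => [->|] //; rewrite e2.
Qed.

Lemma contrE i i' f a b :
  contr i i' f (a, b) = (a i == b i')%:R * \sum_l f (mset a i l, mset b i' l).
Proof.
rewrite /contr linextE.
under eq_bigr => y _.
  rewrite ffunE scCE sum_ffunE mulr_sumr mulr_sumr.
  under eq_bigr => l _ do rewrite mdeltaE xpair_eqE -natrM mulnb andbA.
  over.
rewrite exchange_big.
under eq_bigr => l _ do rewrite sum_pair_mset.
rewrite -mulr_suml; congr (_ * _).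
rewrite (bigD1 (a i)) // big1 ?addr0; first by rewrite /= eqxx addr0 eq_sym.
by move=> l /= nl; rewrite eq_sym (negbTE nl).
Qed.


Lemma permVE (sg : {perm 'I_k}) f a b :
  permV sg f (a, b) = f ([ffun x => a (sg x)], b).
Proof.
rewrite /permV linextE (bigD1 (([ffun x => a (sg x)], b) : mbasis n k)) // big1 ?addr0.
  rewrite mdeltaE /= xpair_eqE eqxx andbT.
  have -> : a == [ffun j => [ffun x => a (sg x)] ((sg^-1)%g j)].
    by apply/eqP/ffunP => x; rewrite !ffunE permKV.
  by rewrite mulr1 addr0.
move=> [y1 y2] /andP[_ ny]; rewrite mdeltaE /= xpair_eqE.
case: (eqVneq a _) => [ea|]; last by rewrite mulr0.
case: (eqVneq b y2) => [eb|]; last by rewrite mulr0.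
exfalso; move/eqP: ny; apply; congr (_, _) => //.
by apply/ffunP => x; rewrite ea !ffunE permK.
Qed.

Lemma permVdE (sg : {perm 'I_k}) f a b :
  permVd sg f (a, b) = f (a, [ffun x => b (sg x)]).
Proof.
rewrite /permVd linextE (bigD1 ((a, [ffun x => b (sg x)]) : mbasis n k)) // big1 ?addr0.
  rewrite mdeltaE /= xpair_eqE eqxx /=.
  have -> : b == [ffun j => [ffun x => b (sg x)] ((sg^-1)%g j)].
    by apply/eqP/ffunP => x; rewrite !ffunE permKV.
  by rewrite mulr1 addr0.
move=> [y1 y2] /andP[_ ny]; rewrite mdeltaE /= xpair_eqE.
case: (eqVneq a y1) => [ea|]; last by rewrite mulr0.
case: (eqVneq b _) => [eb|]; last by rewrite mulr0.
exfalso; move/eqP: ny; apply; congr (_, _) => //.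
by apply/ffunP => x; rewrite eb !ffunE permK.
Qed.

Definition tr j f a b : CC := \sum_(m : 'I_n) f (mset a j m, mset b j m).

Lemma tr_mset j f a b m : tr j f (mset a j m) (mset b j m) = tr j f a b.
Proof. by apply: eq_bigr => l _; rewrite !mset_id. Qed.

Lemma trB j f g a b : tr j (f - g) a b = tr j f a b - tr j g a b.
Proof. by rewrite /tr -sumrB; apply: eq_bigr => l _; rewrite !ffunE. Qed.

Lemma trD j f g a b : tr j (f + g) a b = tr j f a b + tr j g a b.
Proof. by rewrite /tr -big_split; apply: eq_bigr => l _; rewrite !ffunE. Qed.

Lemma trZ j (c : CC) f a b : tr j (c *: f) a b = c * tr j f a b.
Proof. by rewrite /tr mulr_sumr; apply: eq_bigr => l _; rewrite !ffunE. Qed.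

Lemma tr0 j a b : tr j 0 a b = 0.
Proof. by rewrite /tr big1 // => l _; rewrite ffunE. Qed.

Lemma tr_contr j i i' f a b : i != j -> i' != j ->
  tr j (contr i i' f) a b = (a i == b i')%:R * \sum_l tr j f (mset a i l) (mset b i' l).
Proof.
move=> ij i'j; rewrite /tr mulr_sumr.
under eq_bigr => m _ do rewrite contrE !msetE (negbTE ij) (negbTE i'j).
rewrite -!mulr_sumr; congr (_ * _); rewrite exchange_big; apply: eq_bigr => l _.
by apply: eq_bigr => m _; rewrite (mset_comm _ _ _ ij) (mset_comm _ _ _ i'j).
Qed.

Lemma tr_contrjj j f a b : tr j (contr j j f) a b = n%:R * tr j f a b.
Proof.
rewrite /tr; under eq_bigr => m _ do rewrite contrE !msetE !eqxx mul1r.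
under eq_bigr => m _ do under eq_bigr => l _ do rewrite !mset_id.
by rewrite sumr_const card_ord mulr_natl.
Qed.

Lemma tr_permV j (sg : {perm 'I_k}) f a b : sg j = j ->
  tr j (permV sg f) a b = tr j f [ffun x => a (sg x)] b.
Proof.
move=> sj; apply: eq_bigr => m _; rewrite permVE; congr (f (_, _)).
apply/ffunP => x; rewrite !ffunE.
have -> : (sg x == j) = (x == j) by rewrite -{1}sj (inj_eq (@perm_inj _ sg)).
by [].
Qed.

Lemma tr_permVd j (sg : {perm 'I_k}) f a b : sg j = j ->
  tr j (permVd sg f) a b = tr j f a [ffun x => b (sg x)].
Proof.
move=> sj; apply: eq_bigr => m _; rewrite permVdE; congr (f (_, _)).
apply/ffunP => x; rewrite !ffunE.
have -> : (sg x == j) = (x == j) by rewrite -{1}sj (inj_eq (@perm_inj _ sg)).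
by [].
Qed.


Variable j : 'I_k.
Hypothesis n0 : n%:R != 0 :> CC.

Definition Hp f := forall a b, f (a, b) = (a j == b j)%:R * (n%:R^-1 * tr j f a b).
Definition Kp f := forall a b, tr j f a b = 0.

Lemma Hp0 : Hp 0.
Proof. by move=> a b; rewrite tr0 ffunE !mulr0. Qed.

Lemma HpD f g : Hp f -> Hp g -> Hp (f + g).
Proof. by move=> Hf Hg a b; rewrite ffunE trD Hf Hg; ring. Qed.

Lemma HpB f g : Hp f -> Hp g -> Hp (f - g).
Proof. by move=> Hf Hg a b; rewrite !ffunE trB Hf Hg; ring. Qed.

Lemma HpZ (c : CC) f : Hp f -> Hp (c *: f).
Proof. by move=> Hf a b; rewrite ffunE scCE trZ Hf; ring. Qed.

Lemma Hp_sum (I : finType) (P : pred I) (F : I -> Mspace n k) :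
  (forall i, P i -> Hp (F i)) -> Hp (\sum_(i | P i) F i).
Proof.
move=> H; apply: (big_ind Hp) => //; [exact: Hp0 | exact: HpD].
Qed.

Lemma Hp_contr i i' f : i != j -> i' != j -> Hp f -> Hp (contr i i' f).
Proof.
move=> ij i'j Hf a b; rewrite contrE tr_contr //.
under eq_bigr => l _ do rewrite Hf !msetE (eq_sym j i) (eq_sym j i') (negbTE ij) (negbTE i'j).
rewrite -mulr_sumr -mulr_sumr; ring.
Qed.

Lemma Hp_contrjj f : Hp (contr j j f).
Proof.
move=> a b; rewrite contrE tr_contrjj mulKf //.
Qed.

Lemma Hp_pproj i f : i != j -> Hp f -> Hp (pproj i f).
Proof. by move=> ij Hf; apply: HpZ; apply: Hp_contr. Qed.

Lemma Hp_permV (sg : {perm 'I_k}) f : sg j = j -> Hp f -> Hp (permV sg f).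
Proof.
move=> sj Hf a b; rewrite permVE tr_permV // Hf.
by rewrite ffunE sj.
Qed.

Lemma Hp_permVd (sg : {perm 'I_k}) f : sg j = j -> Hp f -> Hp (permVd sg f).
Proof.
move=> sj Hf a b; rewrite permVdE tr_permVd // Hf.
by rewrite ffunE sj.
Qed.

Lemma Hp_id f : Hp f -> pproj j f = f.
Proof.
move=> Hf; apply/ffunP => -[a b]; rewrite ffunE scCE contrE Hf.
rewrite /tr; ring.
Qed.

Lemma KpB f g : Kp f -> Kp g -> Kp (f - g).
Proof. by move=> Hf Hg a b; rewrite trB Hf Hg subr0. Qed.

Lemma KpZ (c : CC) f : Kp f -> Kp (c *: f).
Proof. by move=> Hf a b; rewrite trZ Hf mulr0. Qed.

Lemma Kp_contr i i' f : i != j -> i' != j -> Kp f -> Kp (contr i i' f).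
Proof.
move=> ij i'j Hf a b; rewrite tr_contr // big1 ?mulr0 // => l _; exact: Hf.
Qed.

Lemma Kp_pproj i f : i != j -> Kp f -> Kp (pproj i f).
Proof. by move=> ij Hf; apply: KpZ; apply: Kp_contr. Qed.

Lemma Kp_e f : Kp (f - pproj j f).
Proof.
move=> a b; rewrite trB trZ tr_contrjj mulrA mulVf // mul1r subrr //.
Qed.

Lemma Kp_kill f : Kp f -> contr j j f = 0.
Proof.
move=> Hf; apply/ffunP => -[a b]; rewrite contrE ffunE.
by have := Hf a b; rewrite /tr => ->; rewrite mulr0.
Qed.


Definition eopl (l : seq 'I_k) : Mspace n k -> Mspace n k :=
  foldr (fun (i : 'I_k) (acc : Mspace n k -> Mspace n k) =>
           fun f => acc f - pproj i (acc f)) (fun f => f) l.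

Lemma contr0 i i' : contr i i' (0 : Mspace n k) = 0.
Proof. exact: linext0. Qed.

Lemma pproj0 i : pproj i (0 : Mspace n k) = 0.
Proof. by rewrite /pproj contr0 scaler0. Qed.

Lemma eopl_K l f : j \in l -> Kp (eopl l f).
Proof.
elim: l => [|i l IH] //= hj.
case: (eqVneq j i) => [<-|nji]; first exact: Kp_e.
rewrite in_cons (negbTE nji) /= in hj.
apply: KpB; first exact: IH.
by apply: Kp_pproj; [rewrite eq_sym | exact: IH].
Qed.

Lemma eopl_H l g : Hp g -> (j \in l -> eopl l g = 0) /\ (j \notin l -> Hp (eopl l g)).
Proof.
move=> Hg; elim: l => [|i l [IH1 IH2]] //=.
case: (boolP (j \in l)) => jl.
  split; last by rewrite in_cons jl orbT.
  by move=> _; rewrite IH1 // pproj0 subr0.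
have Hl := IH2 jl.
rewrite in_cons (negbTE jl) orbF; split.
  by move=> /eqP <-; rewrite Hp_id // subrr.
move=> ji; apply: HpB => //; apply: Hp_pproj => //; by rewrite eq_sym.
Qed.

Lemma cs_cons x y s t f : contr_seq (x :: s) (y :: t) f = contr x y (contr_seq s t f).
Proof. by []. Qed.

Lemma Kp_cs s t f : j \notin s -> j \notin t -> Kp f -> Kp (contr_seq s t f).
Proof.
elim: s t => [|x s IH] [|y t] hs ht Kf //.
move: hs ht; rewrite !in_cons !negb_or => /andP[jx js] /andP[jy jt].
rewrite cs_cons; apply: Kp_contr; [by rewrite eq_sym | by rewrite eq_sym | exact: IH].
Qed.

Lemma Hp_cs s t f : j \notin s -> j \notin t -> Hp f -> Hp (contr_seq s t f).
Proof.
elim: s t => [|x s IH] [|y t] hs ht Kf //.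
move: hs ht; rewrite !in_cons !negb_or => /andP[jx js] /andP[jy jt].
rewrite cs_cons; apply: Hp_contr; [by rewrite eq_sym | by rewrite eq_sym | exact: IH].
Qed.

Lemma cs_K x0 s t i f : uniq s -> uniq t -> (i < size s)%N -> (i < size t)%N ->
  nth x0 s i = j -> nth x0 t i = j -> Kp f -> contr_seq s t f = 0.
Proof.
elim: s t i => [|x s IH] [|y t] [|i] //= /andP[xs us] /andP[yt ut] his hit hx hy Kf.
  rewrite cs_cons hx hy; apply: Kp_kill; apply: Kp_cs => //.
    by rewrite -hx.
  by rewrite -hy.
by rewrite cs_cons (IH t i) // contr0.
Qed.

Lemma cs_H x0 s t i f : uniq s -> uniq t -> (i < size s)%N -> (i < size t)%N ->
  nth x0 s i = j -> nth x0 t i = j -> Hp (contr_seq s t f).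
Proof.
elim: s t i => [|x s IH] [|y t] [|i] //= /andP[xs us] /andP[yt ut] his hit hx hy.
  by rewrite cs_cons hx hy; apply: Hp_contrjj.
have jx : x != j by apply: contraNneq xs => ->; rewrite -hx mem_nth.
have jy : y != j by apply: contraNneq yt => ->; rewrite -hy mem_nth.
rewrite cs_cons; apply: (Hp_contr jx jy); exact: (IH t i).
Qed.

Lemma Hp_young (P : {perm 'I_k} -> Mspace n k -> Mspace n k) (T0 : tableau k) f :
  (forall (sg : {perm 'I_k}) g, sg j = j -> Hp g -> Hp (P sg g)) ->
  (forall sg : {perm 'I_k}, sg \in row_group T0 -> sg j = j) ->
  (forall sg : {perm 'I_k}, sg \in col_group T0 -> sg j = j) ->
  Hp f -> Hp (young_op P T0 f).
Proof.
move=> HP hr hc Hf; rewrite /young_op; apply: Hp_sum => rho hrho.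
apply: (HP); first exact: hr.
apply: Hp_sum => g hg; apply: HpZ; apply: (HP) => //; exact: hc.
Qed.

End Aux.

Lemma young0 n k (P : {perm 'I_k} -> Mspace n k -> Mspace n k) (T0 : tableau k) :
  (forall sg, P sg 0 = 0) -> young_op P T0 0 = 0.
Proof.
move=> HP0; rewrite /young_op big1 // => rho _.
have -> : \sum_(g in col_group T0) sgnp g *: P g 0 = 0.
  by apply: big1 => g _; rewrite HP0 scaler0.
exact: HP0.
Qed.

Unset Implicit Arguments.
Set Strict Implicit.

Theorem lemma1p13 (n k r : nat) (hn : (1 <= n)%N) (hk : (1 <= k)%N)
  (hr : (r <= k)%N)
  (s t : seq 'I_k)
  (hs_size : size s = (k - r)%N)
  (hs_sorted : sorted (fun x y : 'I_k => (val x < val y)%N) s)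
  (ht_size : size t = (k - r)%N)
  (ht_uniq : uniq t)
  (lam mu : seq nat) (hlam : is_partition lam r) (hmu : is_partition mu r)
  (T Tstar : tableau k)
  (hT : standard_tableau lam [set x | x \notin s] T)
  (hTstar : standard_tableau mu [set x | x \notin t] Tstar)
  (hst : exists i : nat, (i < k - r)%N /\
           nth 0%N (map val s) i = nth 0%N (map val t) i) :
  let y := fun f : Mspace n k => yV T (yVd Tstar (@contr_seq n k s t f)) in
  forall f : Mspace n k, @eop n k (y f) = 0 /\ y (@eop n k f) = 0.
Proof.
move=> y f.
have n0 : n%:R != 0 :> CC by rewrite pnatr_eq0 -lt0n.
pose x0 : 'I_k := Ordinal hk.
case: hst => i [hi hv].
have his : (i < size s)%N by rewrite hs_size.
have hit : (i < size t)%N by rewrite ht_size.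
pose j := nth x0 s i.
have hjs : nth x0 s i = j by [].
have hjt : nth x0 t i = j.
  apply: val_inj; rewrite /j -(nth_map x0 0%N val his) -(nth_map x0 0%N val hit).
  by rewrite hv.
have us : uniq s.
  apply: (sorted_uniq _ _ hs_sorted).
    by move=> a b c; apply: ltn_trans.
  by move=> a; apply: ltnn.
have js : j \in s by rewrite -hjs mem_nth.
have jt : j \in t by rewrite -hjt mem_nth.
have njT : j \notin entries T.
  by case: hT => _ _ hmem _ _; rewrite hmem inE js.
have njT' : j \notin entries Tstar.
  by case: hTstar => _ _ hmem _ _; rewrite hmem inE jt.
have fixr : forall (T0 : tableau k) (sg : {perm 'I_k}), j \notin entries T0 ->
    sg \in row_group T0 -> sg j = j.
  move=> T0 sg nj; rewrite inE => /forallP /(_ j).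
  by rewrite (negbTE nj) => /eqP.
have fixc : forall (T0 : tableau k) (sg : {perm 'I_k}), j \notin entries T0 ->
    sg \in col_group T0 -> sg j = j.
  move=> T0 sg nj; rewrite inE => /forallP /(_ j).
  by rewrite (negbTE nj) => /eqP.
split.
  have Hy : Hp j (y f).
    rewrite /y /yV /yVd.
    apply: Hp_young.
    - by move=> sg g sj Hg; apply: Hp_permV.
    - by move=> sg; apply: fixr.
    - by move=> sg; apply: fixc.
    apply: Hp_young.
    - by move=> sg g sj Hg; apply: Hp_permVd.
    - by move=> sg; apply: fixr.
    - by move=> sg; apply: fixc.
    exact: (@cs_H n k j n0 x0 s t i _ us ht_uniq his hit hjs hjt).
  exact: ((eopl_H (enum 'I_k) Hy).1 (mem_enum _ j)).
rewrite /y (cs_K us ht_uniq his hit hjs hjt); last first.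
  exact: (@eopl_K n k j n0 (enum 'I_k) f (mem_enum _ j)).
rewrite /yVd young0; last by move=> sg; exact: linext0.
rewrite /yV young0 //; by move=> sg; exact: linext0.
Qed.
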